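(* Let $q>1$, $0\le M_0<M$, let $u$ be a sufficiently smooth $L$-periodic solution of $u_t=-\alpha uu_x+\beta u_{xxx}$ on $[0,T]\times\mathbb{R}$, and $r>\sup_{t,x}|u(t,x)|$. Assume $u^{(0)}_k=u(0,k\Delta x)$, that $u^{(0)},\dots,u^{(M_0)}$ are obtained successively as solutions of the scheme, that $r\ge\max_{m'\le M_0}\|u^{(m')}\|_\infty$, that $\Delta t<\min\{\varepsilon_1(q,r,\Delta x),\varepsilon_2(q,r,\Delta x)\}$, and let $u^{(M_0+1)}$ be the solution of the scheme at step $M_0$ with $\|u^{(M_0+1)}\|_\infty\le qr$. Let $C(q,r)>0$ be a constant, independent of $\Delta t$ and $\Delta x$, such that for sufficiently small $\Delta t\le\Delta x$ one has $\|e^{(m)}\|_{H^1}\le C(q,r)((\Delta t)^2+(\Delta x)^2)$ for $m=0,\dots,M_0+1$, and let $\Delta t\le \Delta x$ be that small. If $$\Delta x\le\left(\frac{r-\sup_{(t,x)\in[0,T]\times[0,L]}|u(t,x)|}{2\hat L\,C(q,r)}\right)^{1/2},\qquad \hat L=\sqrt2\max\{\sqrt L,1/\sqrt L\},$$ then $\|u^{(m)}\|_\infty\le r$ for $m=0,1,\dots,M_0+1$.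
   Context: $L>0$, $K\in\mathbb{N}$, $\Delta x=L/K$; $T>0$, $M\in\mathbb{N}$, $\Delta t=T/M$; $\alpha\in\mathbb{R}$, $\beta\ne0$. Grid functions are $K$-periodic real sequences. $\delta^+_x v_k=(v_{k+1}-v_k)/\Delta x$, $\delta^{\langle 1\rangle}_x v_k = (v_{k+1}-v_{k-1})/(2\Delta x)$, $\delta^{\langle 2\rangle}_x v_k = (v_{k+1}-2v_k+v_{k-1})/(\Delta x)^2$, $\|v\|=(\sum_{k=1}^K v_k^2\Delta x)^{1/2}$, $\|v\|_\infty=\max_k|v_k|$, $\|v\|_{H^1}=(\|v\|^2+\|\delta^+_xv\|^2)^{1/2}$; $\delta^+_t v^{(n)}=(v^{(n+1)}-v^{(n)})/\Delta t$, $\mu^+_t v^{(n)}=(v^{(n+1)}+v^{(n)})/2$. The scheme: $u^{(n+1)}$ solves it at step $n$ if $\delta^+_t u^{(n)}_k = -\frac{\alpha}{6}\delta^{\langle 1\rangle}_x\{(u^{(n+1)}_k)^2 + u^{(n+1)}_k u^{(n)}_k + (u^{(n)}_k)^2\} + \beta\delta^{\langle 1\rangle}_x\delta^{\langle 2\rangle}_x \mu^+_t u^{(n)}_k$ for all $k$. $\varepsilon_1(q,r,\Delta x) = (q-1)(\Delta x)^3[\frac{|\alpha|}{6}(\Delta x)^2(q^2+q+1)r + \frac{3}{2}|\beta|(q+1)]^{-1}$, $\varepsilon_2(q,r,\Delta x) = (\Delta x)^3[\frac{|\alpha|}{6}(\Delta x)^2(2q+1)r + \frac{3}{2}|\beta|]^{-1}$.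 $\tilde u^{(m)}_k=u(m\Delta t,k\Delta x)$, $e^{(m)}=u^{(m)}-\tilde u^{(m)}$. *)

(* Defs.v *)
From Stdlib Require Import Reals ZArith List Lra.
From Coquelicot Require Import Coquelicot.
Import ListNotations.
Open Scope R_scope.

(* Grid functions: K-periodic real sequences, represented as Z -> R
   (periodicity is imposed as a hypothesis where needed). *)

Definition gsum (K : nat) (f : Z -> R) : R :=
  fold_right Rplus 0 (map (fun i => f (Z.of_nat i)) (seq 1 K)).

Definition gmax_abs (K : nat) (v : Z -> R) : R :=
  fold_right Rmax 0 (map (fun i => Rabs (v (Z.of_nat i))) (seq 1 K)).

Definition dplus (dx : R) (v : Z -> R) : Z -> R :=
  fun k => (v (k + 1)%Z - v k) / dx.
Definition d1 (dx : R) (v : Z -> R) : Z -> R :=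
  fun k => (v (k + 1)%Z - v (k - 1)%Z) / (2 * dx).
Definition d2 (dx : R) (v : Z -> R) : Z -> R :=
  fun k => (v (k + 1)%Z - 2 * v k + v (k - 1)%Z) / (dx ^ 2).

Definition l2norm (K : nat) (dx : R) (v : Z -> R) : R :=
  sqrt (gsum K (fun k => v k ^ 2 * dx)).
Definition supnorm (K : nat) (v : Z -> R) : R := gmax_abs K v.
Definition h1norm (K : nat) (dx : R) (v : Z -> R) : R :=
  sqrt (l2norm K dx v ^ 2 + l2norm K dx (dplus dx v) ^ 2).

Definition scheme_step (dx dt alpha beta : R) (v0 v1 : Z -> R) : Prop :=
  forall k : Z,
    (v1 k - v0 k) / dt =
      - (alpha / 6) * d1 dx (fun j => v1 j ^ 2 + v1 j * v0 j + v0 j ^ 2) k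
      + beta * d1 dx (d2 dx (fun j => (v1 j + v0 j) / 2)) k.

Definition veps1 (alpha beta q r dx : R) : R :=
  (q - 1) * dx ^ 3 /
    (Rabs alpha / 6 * dx ^ 2 * (q ^ 2 + q + 1) * r + 3 / 2 * Rabs beta * (q + 1)).
Definition veps2 (alpha beta q r dx : R) : R :=
  dx ^ 3 / (Rabs alpha / 6 * dx ^ 2 * (2 * q + 1) * r + 3 / 2 * Rabs beta).

Definition Lhat (L : R) : R := sqrt 2 * Rmax (sqrt L) (1 / sqrt L).

Definition kdv_solution (alpha beta L T : R) (u : R -> R -> R) : Prop :=
  (forall t x, u t (x + L) = u t x) /\
  (forall t x, 0 <= t <= T ->
     ex_derive (fun s => u s x) t /\
     (forall n, (n <= 3)%nat -> ex_derive_n (fun y => u t y) n x) /\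
     Derive (fun s => u s x) t =
       - alpha * u t x * Derive (fun y => u t y) x
       + beta * Derive_n (fun y => u t y) 3 x).

(* Main.v *)
Require Import Defs.
From Stdlib Require Import Reals ZArith List Lra Lia Psatz.
From Coquelicot Require Import Coquelicot.
Open Scope R_scope.

Definition gs (f : nat -> R) (a n : nat) : R := fold_right Rplus 0 (map f (seq a n)).

Lemma gs_S f a n : gs f a (S n) = f a + gs f (S a) n.
Proof. reflexivity. Qed.

Lemma gs_0 f a : gs f a 0 = 0.
Proof. reflexivity. Qed.

Lemma gs_split f n m a : gs f a (n + m) = gs f a n + gs f (a + n) m.
Proof.
  revert a; induction n as [|n IH]; intro a.
  - rewrite Nat.add_0_r. simpl. unfold gs at 2. simpl. ring.
  - simpl (S n + m)%nat. rewrite !gs_S, IH.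
    replace (S a + n)%nat with (a + S n)%nat by lia. ring.
Qed.

Lemma gs_nonneg f a n : (forall i, 0 <= f i) -> 0 <= gs f a n.
Proof.
  intro H; revert a; induction n as [|n IH]; intro a.
  - rewrite gs_0; lra.
  - rewrite gs_S. specialize (H a). specialize (IH (S a)). lra.
Qed.

Lemma gs_scale f c a n : gs (fun i => f i * c) a n = gs f a n * c.
Proof.
  revert a; induction n as [|n IH]; intro a.
  - rewrite !gs_0; ring.
  - rewrite !gs_S, IH. ring.
Qed.

Lemma gs_const c a n : gs (fun _ => c) a n = INR n * c.
Proof.
  revert a; induction n as [|n IH]; intro a.
  - rewrite gs_0; simpl; ring.
  - rewrite gs_S, IH, S_INR. ring.
Qed.

Lemma gs_plus f g a n : gs (fun i => f i + g i) a n = gs f a n + gs g a n.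
Proof.
  revert a; induction n as [|n IH]; intro a.
  - rewrite !gs_0; ring.
  - rewrite !gs_S, IH. ring.
Qed.

Lemma gs_le f g a n : (forall i, (a <= i < a + n)%nat -> f i <= g i) -> gs f a n <= gs g a n.
Proof.
  revert a; induction n as [|n IH]; intros a H.
  - rewrite !gs_0; lra.
  - rewrite !gs_S.
    assert (f a <= g a) by (apply H; lia).
    assert (gs f (S a) n <= gs g (S a) n) by (apply IH; intros; apply H; lia).
    lra.
Qed.

Lemma gs_ext f g a n : (forall i, f i = g i) -> gs f a n = gs g a n.
Proof.
  intro H; revert a; induction n as [|n IH]; intro a.
  - reflexivity.
  - rewrite !gs_S, IH, H. reflexivity.
Qed.

Lemma gs_CS f a n : (gs f a n) ^ 2 <= INR n * gs (fun i => f i ^ 2) a n.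
Proof.
  revert a; induction n as [|n IH]; intro a.
  - rewrite !gs_0; simpl; lra.
  - rewrite !gs_S, S_INR.
    specialize (IH (S a)).
    set (s := gs f (S a) n) in *.
    set (Q := gs (fun i => f i ^ 2) (S a) n) in *.
    assert (HQ : 0 <= Q) by (apply gs_nonneg; intro; apply pow2_ge_0).
    assert (Hn : 0 <= INR n) by apply pos_INR.
    destruct (Req_dec (INR n) 0) as [E|E].
    + rewrite E in *. assert (Hs0 : s = 0) by nra. rewrite Hs0. nra.
    + assert (Hn' : 0 < INR n) by lra.
      assert (Eq : INR n * ((INR n + 1) * (f a ^ 2 + Q) - (f a + s) ^ 2) =
        (INR n * f a - s) ^ 2 + (INR n + 1) * (INR n * Q - s ^ 2)) by ring.
      assert (INR n * ((INR n + 1) * (f a ^ 2 + Q) - (f a + s) ^ 2) >= 0)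
        by (rewrite Eq; apply Rle_ge; apply Rplus_le_le_0_compat;
            [apply pow2_ge_0 | apply Rmult_le_pos; lra]).
      set (X := (INR n + 1) * (f a ^ 2 + Q) - (f a + s) ^ 2) in *.
      assert (X >= 0) by (destruct (Rlt_or_le X 0); nra).
      unfold X in *. lra.
Qed.

Lemma gs_tele (b : nat -> R) n i :
  Rabs (b (i + n)%nat - b i) <= gs (fun l => Rabs (b (S l) - b l)) i n.
Proof.
  revert i; induction n as [|n IH]; intro i.
  - rewrite Nat.add_0_r, gs_0. unfold Rminus. rewrite Rplus_opp_r, Rabs_R0. lra.
  - rewrite gs_S. replace (i + S n)%nat with (S i + n)%nat by lia.
    specialize (IH (S i)).
    replace (b (S i + n)%nat - b i) with ((b (S i) - b i) + (b (S i + n)%nat - b (S i))) by ring.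
    eapply Rle_trans; [apply Rabs_triang|]. lra.
Qed.

Lemma gs_sub g K b n : (forall i, 0 <= g i) -> (1 <= b)%nat -> (b + n <= K + 1)%nat ->
  gs g b n <= gs g 1 K.
Proof.
  intros Hg H1 H2.
  replace K with ((b - 1) + (n + (K + 1 - b - n)))%nat by lia.
  rewrite gs_split, gs_split.
  replace (1 + (b - 1))%nat with b by lia.
  assert (0 <= gs g 1 (b - 1)) by (apply gs_nonneg; auto).
  assert (0 <= gs g (b + n) (K + 1 - b - n)) by (apply gs_nonneg; auto).
  lra.
Qed.

Lemma gmax_le K v B : 0 <= B -> (forall i, (1 <= i <= K)%nat -> Rabs (v (Z.of_nat i)) <= B) ->
  gmax_abs K v <= B.
Proof.
  intros HB H. unfold gmax_abs.
  assert (G : forall a n, (1 <= a)%nat -> (a + n <= K + 1)%nat ->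
    fold_right Rmax 0 (map (fun i => Rabs (v (Z.of_nat i))) (seq a n)) <= B).
  { intros a n; revert a; induction n as [|n IH]; intros a Ha Hb.
    - simpl; lra.
    - simpl. apply Rmax_lub. apply H; lia. apply IH; lia. }
  apply G; lia.
Qed.

Lemma Lhat_facts L : 0 < L -> 2 * L <= Lhat L ^ 2 /\ 2 <= Lhat L ^ 2 * L.
Proof.
  intro HL. unfold Lhat.
  set (m := Rmax (sqrt L) (1 / sqrt L)).
  assert (Hs : 0 < sqrt L) by (apply sqrt_lt_R0; lra).
  assert (H1 : sqrt L <= m) by apply Rmax_l.
  assert (H2 : 1 / sqrt L <= m) by apply Rmax_r.
  assert (H3 : 0 < 1 / sqrt L) by (apply Rdiv_lt_0_compat; lra).
  assert (E : (sqrt 2 * m) ^ 2 = 2 * m ^ 2).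
  { rewrite Rpow_mult_distr, pow2_sqrt; lra. }
  assert (EL : sqrt L ^ 2 = L) by (apply pow2_sqrt; lra).
  assert (EL2 : (1 / sqrt L) ^ 2 * L = 1).
  { replace ((1 / sqrt L) ^ 2 * L) with (L / sqrt L ^ 2) by (field; lra).
    rewrite EL. field. lra. }
  rewrite E. split.
  - nra.
  - assert ((1 / sqrt L) ^ 2 <= m ^ 2) by nra. nra.
Qed.

Lemma sobolev (K : nat) (L : R) (e : Z -> R) : 0 < L -> (0 < K)%nat ->
  forall j, (1 <= j <= K)%nat -> Rabs (e (Z.of_nat j)) <= Lhat L * h1norm K (L / INR K) e.
Proof.
  intros HL HK j Hj.
  assert (HKr : 0 < INR K) by (apply lt_0_INR; lia).
  set (dx := L / INR K).
  assert (Hdx : 0 < dx) by (apply Rdiv_lt_0_compat; lra).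
  assert (EKdx : INR K * dx = L) by (unfold dx; field; lra).
  set (a := fun i : nat => e (Z.of_nat i)).
  set (dl := fun l : nat => (a (S l) - a l) / dx).
  set (As := gs (fun i => a i ^ 2) 1 K).
  set (Bs := gs (fun l => dl l ^ 2) 1 K).
  assert (EA : gsum K (fun k => e k ^ 2 * dx) = As * dx).
  { unfold As. rewrite <- gs_scale. reflexivity. }
  assert (EB : gsum K (fun k => dplus dx e k ^ 2 * dx) = Bs * dx).
  { unfold Bs. rewrite <- gs_scale. unfold gsum. apply gs_ext. intro l.
    unfold dl, dplus, a. rewrite Nat2Z.inj_succ. reflexivity. }
  assert (HAs : 0 <= As) by (apply gs_nonneg; intro; apply pow2_ge_0).
  assert (HBs : 0 <= Bs) by (apply gs_nonneg; intro; apply pow2_ge_0).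
  set (Ssum := gs (fun l => Rabs (a (S l) - a l)) 1 K).
  assert (ES : Ssum = gs (fun l => Rabs (dl l)) 1 K * dx).
  { unfold Ssum. rewrite <- gs_scale. apply gs_ext. intro l. unfold dl.
    rewrite Rabs_div, (Rabs_right dx) by lra. field. lra. }
  assert (HS2 : Ssum ^ 2 <= L * (Bs * dx)).
  { rewrite ES. pose proof (gs_CS (fun l => Rabs (dl l)) 1 K) as C.
    rewrite (gs_ext (fun i => Rabs (dl i) ^ 2) (fun l => dl l ^ 2)) in C
      by (intro; apply pow2_abs).
    fold Bs in C. rewrite <- EKdx. nra. }
  assert (Hpt : forall i, (1 <= i < 1 + K)%nat -> a j ^ 2 <= 2 * a i ^ 2 + 2 * Ssum ^ 2).
  { intros i Hi.
    assert (Hd : Rabs (a j - a i) <= Ssum).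
    { assert (Hg : forall l, 0 <= Rabs (a (S l) - a l)) by (intro; apply Rabs_pos).
      destruct (le_lt_dec i j).
      - replace j with (i + (j - i))%nat at 1 by lia.
        eapply Rle_trans; [apply gs_tele|]. apply gs_sub; auto; lia.
      - rewrite Rabs_minus_sym.
        replace i with (j + (i - j))%nat at 1 by lia.
        eapply Rle_trans; [apply gs_tele|]. apply gs_sub; auto; lia. }
    assert (Hd2 : (a j - a i) ^ 2 <= Ssum ^ 2).
    { rewrite <- pow2_abs. assert (0 <= Rabs (a j - a i)) by apply Rabs_pos. nra. }
    pose proof (pow2_ge_0 (2 * a i - a j)). nra. }
  apply gs_le in Hpt.
  rewrite gs_const, gs_plus, gs_const in Hpt.
  rewrite (gs_ext (fun i => 2 * a i ^ 2) (fun i => a i ^ 2 * 2)) in Hpt by (intro; ring).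
  rewrite gs_scale in Hpt. fold As in Hpt.
  destruct (Lhat_facts L HL) as [HL1 HL2].
  assert (Hfin : a j ^ 2 <= Lhat L ^ 2 * (As * dx + Bs * dx)).
  { assert (L * a j ^ 2 <= 2 * (As * dx) + 2 * L * Ssum ^ 2).
    { rewrite <- EKdx. nra. }
    assert (HAd : 0 <= As * dx) by nra.
    assert (HBd : 0 <= Bs * dx) by nra.
    assert (2 * (As * dx) <= Lhat L ^ 2 * L * (As * dx)) by (apply Rmult_le_compat_r; lra).
    assert (2 * L * (L * (Bs * dx)) <= L * Lhat L ^ 2 * (Bs * dx)).
    { replace (2 * L * (L * (Bs * dx))) with (L * (2 * L) * (Bs * dx)) by ring.
      apply Rmult_le_compat_r; auto. apply Rmult_le_compat_l; lra. }
    assert (2 * L * Ssum ^ 2 <= 2 * L * (L * (Bs * dx))) by (apply Rmult_le_compat_l; lra).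
    assert (L * a j ^ 2 <= L * (Lhat L ^ 2 * (As * dx + Bs * dx))) by nra.
    nra. }
  unfold h1norm, l2norm. fold dx. rewrite EA, EB.
  rewrite !pow2_sqrt by nra.
  assert (HLh : 0 <= Lhat L).
  { unfold Lhat. apply Rmult_le_pos. apply sqrt_pos.
    eapply Rle_trans; [apply sqrt_pos|apply Rmax_l]. }
  rewrite <- (sqrt_pow2 (Lhat L)) by auto.
  rewrite <- sqrt_mult by nra.
  rewrite <- (sqrt_pow2 (Rabs (e (Z.of_nat j)))) by apply Rabs_pos.
  apply sqrt_le_1_alt. rewrite pow2_abs. exact Hfin.
Qed.
Theorem corollary3p7
  (L T alpha beta q r C supu : R) (K M M0 : nat)
  (u : R -> R -> R) (U : nat -> Z -> R)
  (HL : 0 < L) (HT : 0 < T) (HK : (0 < K)%nat) (HM : (0 < M)%nat)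
  (Hbeta : beta <> 0) (Hq : 1 < q) (HM0 : (M0 < M)%nat)
  (Hu : kdv_solution alpha beta L T u)
  (* supu = sup_{(t,x) in [0,T]x[0,L]} |u(t,x)| *)
  (HS : is_lub (fun y => exists t x, 0 <= t <= T /\ 0 <= x <= L /\ y = Rabs (u t x)) supu)
  (Hr : supu < r)
  (Hper : forall n k, U n (k + Z.of_nat K)%Z = U n k)
  (H0 : forall k, U 0%nat k = u 0 (IZR k * (L / INR K)))
  (Hscheme : forall n, (n <= M0)%nat ->
     scheme_step (L / INR K) (T / INR M) alpha beta (U n) (U (S n)))
  (Hrmax : forall m, (m <= M0)%nat -> supnorm K (U m) <= r)
  (Hdt : T / INR M < Rmin (veps1 alpha beta q r (L / INR K)) (veps2 alpha beta q r (L / INR K)))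
  (Hlast : supnorm K (U (S M0)) <= q * r)
  (HC : 0 < C)
  (Hdtdx : T / INR M <= L / INR K)
  (Herr : forall m, (m <= S M0)%nat ->
     h1norm K (L / INR K)
       (fun k => U m k - u (INR m * (T / INR M)) (IZR k * (L / INR K)))
     <= C * ((T / INR M) ^ 2 + (L / INR K) ^ 2))
  (Hdx : L / INR K <= sqrt ((r - supu) / (2 * Lhat L * C))) :
  forall m, (m <= S M0)%nat -> supnorm K (U m) <= r.
Proof.
  intros m Hm.
  assert (HKr : 0 < INR K) by (apply lt_0_INR; lia).
  assert (HMr : 0 < INR M) by (apply lt_0_INR; lia).
  assert (Hdx0 : 0 < L / INR K) by (apply Rdiv_lt_0_compat; lra).
  assert (Hdt0 : 0 < T / INR M) by (apply Rdiv_lt_0_compat; lra).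
  assert (Hsu0 : 0 <= supu).
  { apply Rle_trans with (Rabs (u 0 0)); [apply Rabs_pos|].
    apply (proj1 HS). exists 0, 0. split; [lra|split; [lra|reflexivity]]. }
  set (dx := L / INR K) in *.
  set (dt := T / INR M) in *.
  apply gmax_le; [lra|].
  intros j Hj.
  set (t := INR m * dt).
  set (e := fun k => U m k - u t (IZR k * dx)).
  pose proof (sobolev K L e HL HK j Hj) as Hsob. fold dx in Hsob.
  pose proof (Herr m Hm) as He. fold dt in He. fold t in He. fold e in He.
  assert (Hu0 : Rabs (u t (IZR (Z.of_nat j) * dx)) <= supu).
  { apply (proj1 HS). exists t, (IZR (Z.of_nat j) * dx).
    split; [|split; [|reflexivity]].
    - assert (INR m <= INR M) by (apply le_INR; lia).
      assert (0 <= INR m) by apply pos_INR.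
      unfold t. split.
      + apply Rmult_le_pos; lra.
      + replace T with (INR M * dt) by (unfold dt; field; lra).
        apply Rmult_le_compat_r; lra.
    - rewrite <- INR_IZR_INZ.
      assert (INR j <= INR K) by (apply le_INR; lia).
      assert (0 <= INR j) by apply pos_INR.
      split.
      + apply Rmult_le_pos; lra.
      + replace L with (INR K * dx) by (unfold dx; field; lra).
        apply Rmult_le_compat_r; lra. }
  destruct (Lhat_facts L HL) as [HL1 HL2].
  assert (HLh : 0 < Lhat L).
  { assert (0 <= Lhat L).
    { unfold Lhat. apply Rmult_le_pos. apply sqrt_pos.
      eapply Rle_trans; [apply sqrt_pos|apply Rmax_l]. }
    destruct (Req_dec (Lhat L) 0) as [E|E]; [rewrite E in HL1; nra | lra]. }
  assert (Hpos : 0 < (r - supu) / (2 * Lhat L * C)).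
  { apply Rdiv_lt_0_compat; [lra|]. nra. }
  assert (Hdx2 : dx ^ 2 <= (r - supu) / (2 * Lhat L * C)).
  { rewrite <- (pow2_sqrt ((r - supu) / (2 * Lhat L * C))) by lra.
    apply pow_incr. lra. }
  assert (Hdt2 : dt ^ 2 <= dx ^ 2) by (apply pow_incr; lra).
  assert (Hbound : Lhat L * (C * (dt ^ 2 + dx ^ 2)) <= r - supu).
  { assert (Lhat L * (C * (dt ^ 2 + dx ^ 2)) <= Lhat L * (C * (2 * ((r - supu) / (2 * Lhat L * C))))).
    { apply Rmult_le_compat_l; [lra|]. apply Rmult_le_compat_l; lra. }
    replace (Lhat L * (C * (2 * ((r - supu) / (2 * Lhat L * C))))) with (r - supu) in H
      by (field; lra).
    exact H. }
  assert (Hh : Lhat L * h1norm K dx e <= Lhat L * (C * (dt ^ 2 + dx ^ 2)))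
    by (apply Rmult_le_compat_l; lra).
  replace (U m (Z.of_nat j)) with (e (Z.of_nat j) + u t (IZR (Z.of_nat j) * dx))
    by (unfold e; ring).
  eapply Rle_trans; [apply Rabs_triang|]. lra.
Qed.
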